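(* Let $(\Omega,\mathcal{S},\mu)$ and $(\Omega_i,\mathcal{S}_i,\mu_i)$, $i=1,\dots,k$, be measure spaces and $\phi_i\colon\Omega\to\Omega_i$ measurable maps such that the pushforward of $\mu$ by $\phi_i$ is absolutely continuous with respect to $\mu_i$. Let $c_i>0$, $\theta_i>0$ with $\sum_i\theta_i=1$, $0<p\le1$, and define $p_i$ by $c_i\left(1-\frac1p\right)=\theta_i\left(1-\frac1{p_i}\right)$. If there is a finite constant $\mathcal{C}$ such that $$\int_\Omega\prod_{i=1}^kf_i(\phi_i(x))^{c_i}\,d\mu(x)\le\mathcal{C}\prod_{i=1}^k\left(\int_{\Omega_i}f_i\,d\mu_i\right)^{c_i}$$ for all non-negative measurable $f_i$ on $\Omega_i$, then $$\|f\|_{L^p(d\mu)}\le\mathcal{C}^{\frac1p-1}\prod_{i=1}^k\|(\phi_i)_*f\|_{L^{p_i}(d\mu_i)}^{\theta_i}$$ for all non-negative measurable $f$ on $\Omega$.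
   Context: For non-negative measurable $f$ on $\Omega$, the pushforward $(\phi_i)_*f\colon\Omega_i\to[0,\infty]$ is defined by $\int_{\Omega_i}(\phi_i)_*f\,g\,d\mu_i=\int_\Omega f\,(g\circ\phi_i)\,d\mu$ for all non-negative measurable $g$ on $\Omega_i$. *)

(* Defs.v *)
From HB Require Import structures.
From mathcomp Require Import all_boot all_order all_algebra.
From mathcomp Require Import all_classical all_reals all_analysis measurable_realfun.
Set Implicit Arguments. Unset Strict Implicit. Unset Printing Implicit Defensive.
Import Order.TTheory GRing.Theory Num.Theory.
Local Open Scope classical_set_scope.
Local Open Scope ring_scope.
Local Open Scope ereal_scope.

Definition nonneg_mfun d (T : measurableType d) (R : realType) (f : T -> \bar R) :=
  measurable_fun [set: T] f /\ (forall x, 0 <= f x).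

(* F is the pushforward (phi)_* f of f : Omega -> [0,oo] along phi, in the sense
   int_{Omega_i} F g dmu_i = int_Omega f (g o phi) dmu for all non-negative
   measurable g on Omega_i *)
Definition is_pushforward d d' (T : measurableType d) (U : measurableType d')
  (R : realType) (mu : {measure set T -> \bar R}) (nu : {measure set U -> \bar R})
  (phi : T -> U) (f : T -> \bar R) (F : U -> \bar R) :=
  nonneg_mfun F /\
  forall g : U -> \bar R, nonneg_mfun g ->
    \int[nu]_y (F y * g y) = \int[mu]_x (f x * g (phi x)).

Definition Lpnorm d (T : measurableType d) (R : realType)
  (mu : {measure set T -> \bar R}) (p : R) (f : T -> \bar R) : \bar R :=
  (\int[mu]_x (f x `^ p)) `^ (p^-1).

(* Main.v *)
Require Import Defs.
From HB Require Import structures.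
From mathcomp Require Import all_boot all_order all_algebra.
From mathcomp Require Import all_classical all_reals all_analysis measurable_realfun.
From mathcomp Require Import ring lra.
Import Order.TTheory GRing.Theory Num.Theory.

Module Helpers.
Local Open Scope classical_set_scope.
Local Open Scope ring_scope.
Section real_lemmas.
Context {R : realType}.

Lemma powR_exp (x r : R) : 0 < x -> x `^ r = expR (r * ln x).
Proof. by move=> x0; rewrite /powR gt_eqF. Qed.

Lemma ln_le_sub1 (x : R) : 0 < x -> ln x <= x - 1.
Proof. move=> x0; have := expR_ge1Dx (ln x); rewrite lnK ?posrE //; lra. Qed.

Lemma amgm k (l z : 'I_k -> R) (l0 y : R) :
  (forall i, 0 <= l i) -> (forall i, 0 < z i) -> 0 < l0 -> 0 < y ->
  \sum_i l i + l0 = 1 ->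
  \sum_i l i * ln (z i) + l0 * ln y <= ln (\sum_i l i * z i + l0 * y).
Proof.
move=> l0i z0 l00 y0 hs.
set m := \sum_i l i * z i + l0 * y.
have m0 : 0 < m.
  rewrite /m ltr_wpDl ?mulr_gt0 //; apply: sumr_ge0 => i _.
  by rewrite mulr_ge0 // ltW.
have h1 i : l i * (ln (z i) - ln m) <= l i * (z i / m) - l i.
  rewrite -ln_div ?posrE // -[X in _ <= _ - X]mulr1 -mulrBr.
  by apply: ler_wpM2l => //; apply: ln_le_sub1; rewrite divr_gt0.
have h2 : l0 * (ln y - ln m) <= l0 * (y / m) - l0.
  rewrite -ln_div ?posrE // -[X in _ <= _ - X]mulr1 -mulrBr.
  by apply: ler_wpM2l; [exact: ltW|apply: ln_le_sub1; rewrite divr_gt0].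
have H1 : \sum_i l i * (ln (z i) - ln m) <= \sum_i (l i * (z i / m) - l i).
  by apply: ler_sum => i _; exact: h1.
have := lerD H1 h2.
have e1 : \sum_i l i * (ln (z i) - ln m) = \sum_i l i * ln (z i) - (\sum_i l i) * ln m.
  by rewrite mulr_suml -sumrB; apply: eq_bigr => i _; ring.
have e2 : \sum_i (l i * (z i / m) - l i) = (\sum_i l i * z i) / m - \sum_i l i.
  by rewrite sumrB mulr_suml; congr (_ - _); apply: eq_bigr => i _; ring.
have e3 : (\sum_i l i * z i) / m + l0 * (y / m) = 1.
  by rewrite mulrA -mulrDl mulfV // gt_eqF.
rewrite e1 e2.
move: e3 hs; set A := \sum_i l i * ln (z i); set B := \sum_i l i; set D := (\sum_i l i * z i) / m.
move=> e3 hs.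
have -> : B = 1 - l0 by lra.
nra.
Qed.


Lemma ln_prod_pos k (x : 'I_k -> R) : (forall i, 0 < x i) ->
  ln (\prod_i x i) = \sum_i ln (x i).
Proof.
move=> x0; rewrite (eq_bigr (fun i => expR (ln (x i)))); last first.
  by move=> i _; rewrite lnK ?posrE.
by rewrite -expR_sum expRK.
Qed.

Lemma pw_real k (th c ga q s t u : 'I_k -> R) (p a : R) :
  0 < p < 1 -> (forall i, 0 <= th i) -> \sum_i th i = 1 -> 0 < a ->
  (forall i, 0 < s i) -> (forall i, 0 < t i) -> (forall i, 0 < u i) ->
  (forall i, ln (t i) = - (ga i * ln (s i))) ->
  (forall i, p * th i * ga i = (1 - p) * c i) ->
  (forall i, p * th i * (1 - q i) = (1 - p) * c i * q i) ->
  a `^ p <= p * \sum_i th i * (a * (t i * u i `^ (- (1 - q i))))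
             + (1 - p) * \prod_i (s i * u i `^ q i) `^ c i.
Proof.
move=> /andP[p0 p1] th0 ths a0 s0 t0 u0 ht hga hq.
set z := fun i => a * (t i * u i `^ (- (1 - q i))).
have z0 i : 0 < z i by rewrite /z mulr_gt0 // mulr_gt0 // powR_gt0.
set y := \prod_i (s i * u i `^ q i) `^ c i.
have y0 : 0 < y by apply: prodr_gt0 => i _; rewrite powR_gt0 // mulr_gt0 // powR_gt0.
have := @amgm k (fun i => p * th i) z (1 - p) y.
have -> : p * \sum_i th i * (a * (t i * u i `^ (- (1 - q i)))) = \sum_i p * th i * z i.
  by rewrite mulr_sumr; apply: eq_bigr => i _; rewrite /z mulrA.
move=> /(_ _ z0 _ y0) H.
have H' : \sum_i p * th i * ln (z i) + (1 - p) * ln y <=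
   ln (\sum_i p * th i * z i + (1 - p) * y).
  apply: H; first by move=> i; rewrite mulr_ge0 // ltW.
    by rewrite subr_gt0.
  by rewrite -mulr_sumr ths; ring.
have hlz i : ln (z i) = ln a - ga i * ln (s i) - (1 - q i) * ln (u i).
  rewrite /z lnM ?posrE ?mulr_gt0 ?powR_gt0 // lnM ?posrE ?powR_gt0 //.
  by rewrite ln_powR ht; ring.
have hly : ln y = \sum_i c i * (ln (s i) + q i * ln (u i)).
  rewrite /y ln_prod_pos; last by move=> i; rewrite powR_gt0 // mulr_gt0 // powR_gt0.
  apply: eq_bigr => i _; rewrite ln_powR lnM ?posrE ?powR_gt0 // ln_powR //.
have key : \sum_i p * th i * ln (z i) + (1 - p) * ln y = p * ln a.
  rewrite hly mulr_sumr -big_split /=.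
  rewrite (eq_bigr (fun i => p * ln a * th i)); last first.
    move=> i _; rewrite hlz; apply/eqP; rewrite -subr_eq0; apply/eqP.
    transitivity (ln (s i) * ((1 - p) * c i - p * th i * ga i) +
                  ln (u i) * ((1 - p) * c i * q i - p * th i * (1 - q i))).
      by ring.
    by rewrite hga hq !subrr !mulr0 addr0.
  by rewrite -mulr_sumr ths mulr1.
rewrite powR_exp // -key.
rewrite -[X in _ <= X]lnK; last first.
  rewrite posrE ltr_wpDl ?mulr_gt0 ?subr_gt0 //.
  apply: sumr_ge0 => i _; apply: mulr_ge0; last exact: ltW.
  by apply: mulr_ge0; [exact: ltW|exact: th0].
by rewrite ler_expR.
Qed.


Local Open Scope ereal_scope.

Lemma sum_inf k (f : 'I_k -> \bar R) j : (forall i, 0 <= f i) -> f j = +oo ->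
  \sum_i f i = +oo.
Proof.
move=> f0 fj; rewrite (bigD1 j) //= fj addye //.
by rewrite gt_eqF // (@lt_le_trans _ _ 0) // sume_ge0.
Qed.

Lemma prod_gt0 k (f : 'I_k -> \bar R) : (forall i, 0 < f i) -> 0 < \prod_i f i.
Proof. by move=> f0; elim/big_ind : _ => [|x y|i _]; [exact: lte01|exact: mule_gt0|exact: f0]. Qed.

Lemma prod_inf k (f : 'I_k -> \bar R) j : (forall i, 0 < f i) -> f j = +oo ->
  \prod_i f i = +oo.
Proof.
move=> f0 fj; rewrite (bigD1 j) //= fj gt0_mulye //.
by elim/big_ind : _ => [|x y|i _]; [exact: lte01|exact: mule_gt0|exact: f0].
Qed.

Definition gfun (t q : R) (v : \bar R) : \bar R :=
  if v == 0 then +oo else t%:E * v `^ (- (1 - q)).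

Lemma gfun_ge0 t q v : (0 <= t)%R -> 0 <= gfun t q v.
Proof. by move=> t0; rewrite /gfun; case: ifP => // _; rewrite mule_ge0 // poweR_ge0. Qed.

Lemma pw_ext k (th c ga q s t : 'I_k -> R) (p : R) (a : \bar R) (u : 'I_k -> \bar R) :
  (0 < p < 1)%R -> (forall i, 0 < th i)%R -> (\sum_i th i = 1)%R ->
  (forall i, 0 < c i)%R -> (forall i, 0 < q i)%R ->
  (forall i, 0 < s i)%R -> (forall i, 0 < t i)%R ->
  (forall i, ln (t i) = - (ga i * ln (s i)))%R ->
  (forall i, p * th i * ga i = (1 - p) * c i)%R ->
  (forall i, p * th i * (1 - q i) = (1 - p) * c i * q i)%R ->
  0 <= a -> (forall i, 0 <= u i) ->
  a `^ p <= p%:E * (\sum_i (th i)%:E * (a * gfun (t i) (q i) (u i)))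
            + (1 - p)%:E * \prod_i ((s i)%:E * u i `^ q i) `^ c i.
Proof.
move=> /andP[p0 p1] th0 ths c0 q0 s0 t0 ht hga hq a0 u0.
have k0 : (0 < k)%N.
  rewrite lt0n; apply/eqP => k0; subst k; move: ths; rewrite big_ord0 => /eqP.
  by rewrite eq_sym oner_eq0.
pose j0 := Ordinal k0.
have T1 : 0 <= p%:E * (\sum_i (th i)%:E * (a * gfun (t i) (q i) (u i))).
  apply: mule_ge0; first by rewrite lee_fin ltW.
  apply: sume_ge0 => i _.
  apply: mule_ge0; first by rewrite lee_fin ltW.
  by apply: mule_ge0 => //; exact: gfun_ge0 (ltW (t0 i)).
have T2 : 0 <= (1 - p)%:E * \prod_i ((s i)%:E * u i `^ q i) `^ c i.
  apply: mule_ge0; first by rewrite lee_fin subr_ge0 ltW.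
  by apply: prode_ge0 => i _; exact: poweR_ge0.
move: a0; rewrite le_eqVlt => /predU1P[a00|a0].
  by subst a; rewrite poweR0r ?gt_eqF //; apply: adde_ge0.
have [[j uj0]|nz] := pselect (exists j, u j = 0).
  have -> : \sum_i (th i)%:E * (a * gfun (t i) (q i) (u i)) = +oo.
    apply: (@sum_inf k (fun i => (th i)%:E * (a * gfun (t i) (q i) (u i))) j).
      move=> i; apply: mule_ge0; first by rewrite lee_fin ltW.
      by apply: mule_ge0; [exact: ltW|exact: gfun_ge0 (ltW (t0 i))].
    by rewrite /gfun uj0 eqxx gt0_muley // gt0_muley // lte_fin.
  by rewrite gt0_muley ?lte_fin // addye ?leey // gt_eqF // (@lt_le_trans _ _ 0).
have upos i : 0 < u i.
  rewrite lt0e u0 andbT; apply/negP => /eqP ui; apply: nz; by exists i.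
have [[j ujy]|nfin] := pselect (exists j, u j = +oo).
  have -> : \prod_i ((s i)%:E * u i `^ q i) `^ c i = +oo.
    apply: (@prod_inf k (fun i => ((s i)%:E * u i `^ q i) `^ c i) j).
      by move=> i; apply: poweR_gt0; rewrite mule_gt0 ?lte_fin // poweR_gt0.
    by rewrite ujy poweRyr ?gt_eqF // gt0_muley ?lte_fin // poweRyr // gt_eqF.
  rewrite gt0_muley ?lte_fin ?subr_gt0 // addey ?leey // gt_eqF //.
  exact: (@lt_le_trans _ _ 0).
have ufin i : u i = (fine (u i))%:E.
  rewrite fineK // ge0_fin_numE // ltey; apply/negP => /eqP ui; apply: nfin; by exists i.
have ur0 i : (0 < fine (u i))%R by rewrite -lte_fin -ufin.
clear T1; move: a0; case: a => [a| |] // a0.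
  rewrite (eq_bigr (fun i => ((th i) * (a * (t i * fine (u i) `^ (-(1 - q i)))))%:E)); last first.
    move=> i _; have := ur0 i; have := ufin i; set v := fine (u i) => -> v0.
    by rewrite /gfun eqe gt_eqF.
  rewrite [\prod_i _](eq_bigr (fun i => ((s i * fine (u i) `^ q i) `^ c i)%:E)); last first.
    by move=> i _; have := ufin i; set v := fine (u i) => ->.
  rewrite sumEFin prodEFin -!EFinM -EFinD poweR_EFin lee_fin.
  by apply: pw_real => //; [rewrite p0 p1|move=> i; exact: ltW].
have -> : \sum_i (th i)%:E * (+oo * gfun (t i) (q i) (u i)) = +oo.
  apply: (@sum_inf k (fun i => (th i)%:E * (+oo * gfun (t i) (q i) (u i))) j0).
    move=> i; apply: mule_ge0; first by rewrite lee_fin ltW.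
    by apply: mule_ge0; [exact: leey|exact: gfun_ge0 (ltW (t0 i))].
  rewrite /gfun gt_eqF // ufin poweR_EFin gt0_mulye ?gt0_muley ?lte_fin //.
  by rewrite mulr_gt0 // powR_gt0.
by rewrite gt0_muley ?lte_fin // addye ?leey // gt_eqF // (@lt_le_trans _ _ 0).
Qed.

End real_lemmas.

Section meas.
Context d (T : measurableType d) (R : realType).
Local Open Scope ereal_scope.

Lemma emeasurable_prod_ord k (h : 'I_k -> T -> \bar R) :
  (forall i, measurable_fun [set: T] (h i)) ->
  measurable_fun [set: T] (fun x => \prod_i h i x).
Proof.
move=> mh.
suff H : forall s : seq 'I_k, measurable_fun [set: T] (fun x => \prod_(i <- s) h i x).
  exact: H.
elim => [|i s ih].
  by under eq_fun do rewrite big_nil; exact: measurable_cst.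
by under eq_fun do rewrite big_cons; exact: emeasurable_funM.
Qed.

Lemma measurable_gfun (t q : R) : measurable_fun [set: \bar R] (gfun t q).
Proof.
rewrite /gfun; apply: measurable_fun_ifT.
- exact: (@measurable_fun_eqe _ _ R setT id (cst 0) (@measurable_id _ _ setT) (measurable_cst _)).
- exact: measurable_cst.
- by apply: emeasurable_funM; [exact: measurable_cst | exact: measurable_poweR].
Qed.

End meas.

Section more.
Context {R : realType}.
Local Open Scope ereal_scope.

Lemma prod_pow_sum k (th : 'I_k -> R) (X : \bar R) :
  (forall i, 0 < th i)%R -> (\sum_i th i = 1)%R -> 0 <= X ->
  \prod_i X `^ th i = X.
Proof.
move=> th0 ths X0.
have k0 : (0 < k)%N.
  rewrite lt0n; apply/eqP => k0; subst k; move: ths; rewrite big_ord0 => /eqP.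
  by rewrite eq_sym oner_eq0.
pose j0 := Ordinal k0.
case: X X0 => [x| |] // x0.
  move: x0; rewrite lee_fin le_eqVlt => /predU1P[<-|x0].
    by rewrite (bigD1 j0) //= powR0 ?gt_eqF // mul0e.
  rewrite (eq_bigr (fun i => (expR (th i * ln x))%:E)); last first.
    by move=> i _; rewrite poweR_EFin powR_exp.
  by rewrite prodEFin -expR_sum -mulr_suml ths mul1r lnK.
apply: (@prod_inf _ k (fun i => +oo `^ th i) j0).
  by move=> i; rewrite poweRyr ?gt_eqF.
by rewrite poweRyr ?gt_eqF.
Qed.

Lemma gfun_bound (t r : R) (v : \bar R) : (0 < t)%R -> (0 < r)%R -> 0 <= v ->
  v * gfun t r v <= t%:E * v `^ r.
Proof.
move=> t0 r0; case: v => [v| |] // v0.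
  move: v0; rewrite lee_fin le_eqVlt => /predU1P[<-|v0].
    by rewrite mul0e poweR0r ?gt_eqF // mule0.
  rewrite /gfun eqe gt_eqF //= -!EFinM lee_fin.
  by rewrite mulrCA opprB mulr_powRB1 // ltW.
by rewrite poweRyr ?gt_eqF // gt0_muley ?lte_fin // leey.
Qed.

End more.

End Helpers.
Import Helpers.

Local Open Scope classical_set_scope.
Local Open Scope ring_scope.
Local Open Scope ereal_scope.

Theorem theorem9p1 (R : realType) (d : measure_display) (Omega : measurableType d)
  (mu : {measure set Omega -> \bar R}) (k : nat)
  (di : 'I_k -> measure_display) (Omegai : forall i, measurableType (di i))
  (mui : forall i, {measure set Omegai i -> \bar R})
  (phi : forall i, Omega -> Omegai i)
  (c theta pi : 'I_k -> R) (p C : R) :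
  (forall i, measurable_fun [set: Omega] (phi i)) ->
  (forall i, pushforward mu (phi i) `<< mui i) ->
  (forall i, (0 < c i)%R) ->
  (forall i, (0 < theta i)%R) ->
  (\sum_(i < k) theta i = 1)%R ->
  (0 < p <= 1)%R ->
  (forall i, c i * (1 - p^-1) = theta i * (1 - (pi i)^-1))%R ->
  (0 <= C)%R ->
  (forall f : forall i, Omegai i -> \bar R, (forall i, nonneg_mfun (f i)) ->
     \int[mu]_x (\prod_(i < k) (f i (phi i x)) `^ (c i))
       <= C%:E * \prod_(i < k) (\int[mui i]_y f i y) `^ (c i)) ->
  forall (f : Omega -> \bar R) (F : forall i, Omegai i -> \bar R),
    nonneg_mfun f ->
    (forall i, is_pushforward mu (mui i) (phi i) f (F i)) ->
    Lpnorm mu p f <= C%:E `^ (p^-1 - 1) * \prod_(i < k) (Lpnorm (mui i) (pi i) (F i)) `^ (theta i).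
Proof.
move=> mphi _ c0 th0 ths /andP[p0 p1] hpi C0 hC f F [mf f0] hF.
have k0 : (0 < k)%N.
  rewrite lt0n; apply/eqP => k0; subst k; move: ths; rewrite big_ord0 => /eqP.
  by rewrite eq_sym oner_eq0.
pose j0 := Ordinal k0.
have mF i : measurable_fun setT (F i) := (hF i).1.1.
have F0 i y : 0 <= F i y := (hF i).1.2 y.
have hF1 i : \int[mui i]_y F i y = \int[mu]_x f x.
  have := (hF i).2 (cst 1) (conj (measurable_cst _) (fun _ => lee01)).
  rewrite /= (eq_integral (fun y => F i y)); last by move=> y _; rewrite mule1.
  by move=> ->; apply: eq_integral => x _; rewrite mule1.
have pi0 i : (0 < pi i)%R.
  rewrite -invr_gt0.
  have P1 : (1 <= p^-1)%R by rewrite invf_ge1.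
  have := hpi i; have := th0 i; have := c0 i; nra.
have RHS0 : 0 <= C%:E `^ (p^-1 - 1) * \prod_(i < k) (Lpnorm (mui i) (pi i) (F i)) `^ (theta i).
  by apply: mule_ge0; [exact: poweR_ge0|apply: prode_ge0 => i _; exact: poweR_ge0].
have lhs0 : \int[mu]_x (f x `^ p) = 0 -> Lpnorm mu p f <= C%:E `^ (p^-1 - 1) * \prod_(i < k) (Lpnorm (mui i) (pi i) (F i)) `^ (theta i).
  by move=> h; rewrite /Lpnorm h poweR0r ?invr_eq0 ?gt_eqF.
move: p1; rewrite le_eqVlt => /predU1P[p1|p1].
  subst p.
  have pi1 i : pi i = 1%R.
    have := hpi i; rewrite invr1 subrr mulr0 => /esym/eqP.
    rewrite mulf_eq0 gt_eqF //= subr_eq0 eq_sym invr_eq1 => /eqP //.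
  rewrite /Lpnorm invr1 subrr poweRe0 mul1e poweRe1; last by apply: integral_ge0 => x _; exact: poweR_ge0.
  rewrite (eq_bigr (fun i => (\int[mu]_x f x) `^ theta i)); last first.
    move=> i _; rewrite pi1 invr1 poweRe1; last by apply: integral_ge0 => x _; exact: poweR_ge0.
    by rewrite (eq_integral (fun y => F i y)) ?hF1 // => y _; rewrite poweRe1.
  rewrite prod_pow_sum //; last by apply: integral_ge0 => x _.
  by rewrite le_eqVlt; apply/orP; left; apply/eqP; apply: eq_integral => x _; rewrite poweRe1.
move: C0; rewrite le_eqVlt => /predU1P[C00|C0].
  subst C; apply: lhs0.
  have mu0 : mu setT = 0.
    have := hC (fun i => cst 1) (fun i => conj (measurable_cst _) (fun _ => lee01)).
    rewrite mul0e (eq_integral (cst 1)); last first.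
      by move=> x _; rewrite big1 // => i _; exact: poweR1r.
    rewrite integral_cst // mul1e => h; apply/eqP; rewrite eq_le h measure_ge0 //.
  rewrite (ae_eq_integral (cst 0)) ?integral0 //.
  - exact: measurableT_comp (measurable_poweR _) mf.
  - exact: ae_eq0.
pose M i := \int[mui i]_y (F i y) `^ (pi i).
have M0 i : 0 <= M i by apply: integral_ge0 => y _; exact: poweR_ge0.
have mFp i : measurable_fun setT (fun y => F i y `^ pi i).
  exact: measurableT_comp (measurable_poweR _) (mF i).
have [[j Mj0]|Mnz] := pselect (exists j, M j = 0).
  apply: lhs0.
  have ae1 : ae_eq (mui j) setT (fun y => F j y `^ pi j) (cst 0).
    apply/ae_eq_integral_abs => //; rewrite -[RHS]Mj0; apply: eq_integral => y _.
    by rewrite gee0_abs // poweR_ge0.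
  have ae2 : ae_eq (mui j) setT (F j) (cst 0).
    by apply: filterS ae1 => y /= h /h; apply: poweR_eq0_eq0.
  have intFj : \int[mui j]_y F j y = 0.
    by rewrite (ae_eq_integral (cst 0)) ?integral0.
  rewrite hF1 in intFj.
  have ae3 : ae_eq mu setT f (cst 0).
    apply/ae_eq_integral_abs => //; rewrite -[RHS]intFj; apply: eq_integral => x _.
    by rewrite gee0_abs.
  rewrite (ae_eq_integral (cst 0)) ?integral0 //.
  - exact: measurableT_comp (measurable_poweR _) mf.
  - by apply: filterS ae3 => x /= h /h ->; rewrite poweR0r ?gt_eqF.
have Mpos i : 0 < M i.
  rewrite lt0e M0 andbT; apply/negP => /eqP Mi; apply: Mnz; by exists i.
have [[j Mjy]|Mfin] := pselect (exists j, M j = +oo).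
  rewrite (@prod_inf _ k (fun i => Lpnorm (mui i) (pi i) (F i) `^ theta i) j).
  - by rewrite /= gt0_muley ?leey // lte_fin powR_gt0.
  - by move=> i; rewrite /Lpnorm; apply: poweR_gt0; apply: poweR_gt0; exact: Mpos.
  - rewrite /Lpnorm -/(M j) Mjy poweRyr; last by rewrite invr_eq0 (gt_eqF (pi0 j)).
    by rewrite poweRyr // (gt_eqF (th0 j)).
have Mfin' i : M i = (fine (M i))%:E.
  rewrite fineK // ge0_fin_numE // ltey; apply/negP => /eqP Mi; apply: Mfin; by exists i.
pose m i := fine (M i).
have m0 i : (0 < m i)%R by rewrite -lte_fin -Mfin'.
have hP : (p * p^-1 = 1)%R by rewrite mulfV // gt_eqF.
have P1 : (1 < p^-1)%R by rewrite invf_gt1.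
pose ga i := (c i * (p^-1 - 1) / theta i)%R.
have ga0 i : (0 < ga i)%R by rewrite /ga divr_gt0 // mulr_gt0 // subr_gt0.
have F1 i : (p * theta i * (pi i)^-1 = p * theta i + (1 - p) * c i)%R.
  apply/eqP; rewrite -subr_eq0; apply/eqP.
  transitivity (p * (c i * (1 - p^-1) - theta i * (1 - (pi i)^-1)) + c i * (p * p^-1 - 1))%R.
    by ring.
  by rewrite hpi hP !subrr !mulr0 addr0.
have hga i : (p * theta i * ga i = (1 - p) * c i)%R.
  by rewrite /ga; field; rewrite (gt_eqF (th0 i)) (gt_eqF p0).
have hq i : (p * theta i * (1 - pi i) = (1 - p) * c i * pi i)%R.
  apply/eqP; rewrite -subr_eq0; apply/eqP.
  transitivity (p * theta i * (1 - pi i * (pi i)^-1) - pi i * (p * theta i + (1 - p) * c i - p * theta i * (pi i)^-1))%R.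
    by ring.
  by rewrite F1 mulfV ?(gt_eqF (pi0 i)) // !subrr !mulr0 subrr.
pose L := ((1 - p) * ln C + \sum_i (p * theta i + (1 - p) * c i) * ln (m i))%R.
pose s i := expR ((ln (m i) - L) / ga i).
pose t i := expR (L - ln (m i)).
have ht i : ln (t i) = (- (ga i * ln (s i)))%R.
  by rewrite /t /s !expRK; field; rewrite (gt_eqF (ga0 i)).
pose G i := fun y => gfun (t i) (pi i) (F i y).
pose H i := fun y => (s i)%:E * F i y `^ pi i.
have mG i : measurable_fun setT (G i) := measurableT_comp (measurable_gfun R (t i) (pi i)) (mF i).
have G0 i y : 0 <= G i y := gfun_ge0 _ _ _ (ltW (expR_gt0 _)).
have mH i : measurable_fun setT (H i) := emeasurable_funM (measurable_cst _) (mFp i).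
have H0 i y : 0 <= H i y.
  by apply: mule_ge0; [rewrite lee_fin ltW ?expR_gt0|exact: poweR_ge0].
have mfG i : measurable_fun setT (fun x => f x * G i (phi i x)).
  by apply: emeasurable_funM => //; exact: measurableT_comp (mG i) (mphi i).
have mP : measurable_fun setT (fun x => \prod_i (H i (phi i x)) `^ c i).
  apply: emeasurable_prod_ord => i; apply: measurableT_comp (measurable_poweR _) _.
  exact: measurableT_comp (mH i) (mphi i).
have mS : measurable_fun setT (fun x => \sum_i (theta i)%:E * (f x * G i (phi i x))).
  by apply: emeasurable_sum => i; apply: emeasurable_funM; [exact: measurable_cst| exact: mfG].
have fG0 i x : 0 <= f x * G i (phi i x) by apply: mule_ge0.
have S0 x : 0 <= \sum_i (theta i)%:E * (f x * G i (phi i x)).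
  by apply: sume_ge0 => i _; apply: mule_ge0; [rewrite lee_fin ltW|].
have P0 x : 0 <= \prod_i (H i (phi i x)) `^ c i.
  by apply: prode_ge0 => i _; exact: poweR_ge0.
have S1 : \int[mu]_x (f x `^ p) <= \int[mu]_x (p%:E * (\sum_i (theta i)%:E * (f x * G i (phi i x)))
                 + (1 - p)%:E * \prod_i (H i (phi i x)) `^ c i).
  apply: ge0_le_integral => //.
  - by move=> x _; exact: poweR_ge0.
  - exact: measurableT_comp (measurable_poweR _) mf.
  - by apply: emeasurable_funD; apply: emeasurable_funM => //; exact: measurable_cst.
  move=> x _.
  apply: (@pw_ext R k theta c ga pi s t p (f x) (fun i => F i (phi i x))) => //.
  - by rewrite p0 p1.
  - by move=> i; exact: expR_gt0.
  - by move=> i; exact: expR_gt0.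
have S2 : \int[mu]_x (p%:E * (\sum_i (theta i)%:E * (f x * G i (phi i x)))
                 + (1 - p)%:E * \prod_i (H i (phi i x)) `^ c i) =
   p%:E * (\sum_i (theta i)%:E * \int[mu]_x (f x * G i (phi i x)))
   + (1 - p)%:E * \int[mu]_x (\prod_i (H i (phi i x)) `^ c i).
  rewrite ge0_integralD //; last 4 first.
  - by move=> x _; apply: mule_ge0; [rewrite lee_fin ltW|exact: S0].
  - by apply: emeasurable_funM => //; exact: measurable_cst.
  - by move=> x _; apply: mule_ge0; [rewrite lee_fin subr_ge0 ltW|exact: P0].
  - by apply: emeasurable_funM => //; exact: measurable_cst.
  rewrite ge0_integralZl //; last by rewrite lee_fin ltW.
  rewrite [X in _ + X]ge0_integralZl //; last by rewrite lee_fin subr_ge0 ltW.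
  congr (_ * _ + _).
  rewrite ge0_integral_sum //; last 2 first.
  - by move=> i; apply: emeasurable_funM => //; exact: measurable_cst.
  - by move=> i x _; apply: mule_ge0; [rewrite lee_fin ltW|].
  apply: eq_bigr => i _; rewrite ge0_integralZl //; by rewrite lee_fin ltW.
have S3 i : \int[mu]_x (f x * G i (phi i x)) <= (t i)%:E * (m i)%:E.
  rewrite -((hF i).2 (G i) (conj (mG i) (G0 i))) -Mfin'.
  rewrite -ge0_integralZl_EFin //; last 2 first.
  - by move=> y _; exact: poweR_ge0.
  - by rewrite ltW ?expR_gt0.
  apply: ge0_le_integral => //.
  - by move=> y _; apply: mule_ge0.
  - exact: emeasurable_funM.
  - by apply: emeasurable_funM => //; exact: measurable_cst.
  - by move=> y _; apply: gfun_bound => //; exact: expR_gt0.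
have S4 : \int[mu]_x (\prod_i (H i (phi i x)) `^ c i) <=
          C%:E * \prod_i ((s i)%:E * (m i)%:E) `^ c i.
  have := hC H (fun i => conj (mH i) (H0 i)).
  congr (_ <= _ * _); apply: eq_bigr => i _; congr (_ `^ _).
  rewrite ge0_integralZl_EFin // -?Mfin' //.
  - by move=> y _; exact: poweR_ge0.
  - by rewrite ltW ?expR_gt0.
have S' : \int[mu]_x (f x `^ p) <= p%:E * (\sum_i (theta i)%:E * ((t i)%:E * (m i)%:E))
     + (1 - p)%:E * (C%:E * \prod_i ((s i)%:E * (m i)%:E) `^ c i).
  apply: (le_trans S1); rewrite S2; apply: leeD.
    apply: lee_wpmul2l; first by rewrite lee_fin ltW.
    apply: lee_sum => i _; apply: lee_wpmul2l; first by rewrite lee_fin ltW.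
    exact: S3.
  by apply: lee_wpmul2l => //; rewrite lee_fin subr_ge0 ltW.
have em i : expR (ln (m i)) = m i by rewrite lnK // posrE.
have tm i : (t i * m i = expR L)%R by rewrite /t -[X in (_ * X)%R]em -expRD subrK.
have sm : (C * \prod_i (s i * m i) `^ c i = expR L)%R.
  rewrite (eq_bigr (fun i => expR (c i * ((ln (m i) - L) / ga i + ln (m i))))); last first.
    by move=> i _; rewrite powR_exp ?mulr_gt0 ?expR_gt0 // lnM ?posrE ?expR_gt0 // expRK.
  have eC : expR (ln C) = C by rewrite lnK // posrE.
  rewrite -expR_sum -[X in (X * _)%R]eC -expRD; congr expR.
  have e i : (c i * ((ln (m i) - L) / ga i + ln (m i)) =
      (p * theta i * (ln (m i) - L) + (1 - p) * c i * ln (m i)) / (1 - p))%R.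
    rewrite /ga; field.
    by rewrite subr_eq0 (gt_eqF (th0 i)) (gt_eqF (c0 i)) (gt_eqF p0) eq_sym (lt_eqF p1).
  rewrite (eq_bigr _ (fun i _ => e i)) -mulr_suml.
  have eA : (\sum_i (p * theta i * (ln (m i) - L) + (1 - p) * c i * ln (m i)) =
     \sum_i (p * theta i + (1 - p) * c i) * ln (m i) - p * L)%R.
    rewrite (eq_bigr (fun i => (p * theta i + (1 - p) * c i) * ln (m i) - p * L * theta i)%R); last first.
      by move=> i _; ring.
    by rewrite sumrB -mulr_sumr ths mulr1.
  rewrite eA /L; field.
  by rewrite subr_eq0 eq_sym (lt_eqF p1).
have Kexpr : (p * (\sum_i theta i * (t i * m i)) + (1 - p) * (C * \prod_i (s i * m i) `^ c i) = expR L)%R.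
  rewrite sm (eq_bigr (fun i => theta i * expR L)%R); last by move=> i _; rewrite tm.
  by rewrite -mulr_suml ths mul1r; ring.
have Sfin : \int[mu]_x (f x `^ p) <= (expR L)%:E.
  apply: (le_trans S'); rewrite -Kexpr.
  rewrite (eq_bigr (fun i => (theta i * (t i * m i))%:E)) //.
  rewrite [\prod_i _](eq_bigr (fun i => ((s i * m i) `^ c i)%:E)) //.
  by rewrite sumEFin prodEFin.
rewrite /Lpnorm.
apply: (le_trans (gt0_ler_poweR _ _ _ Sfin)).
- by rewrite invr_ge0 ltW.
- by rewrite in_itv /= leey andbT; apply: integral_ge0 => x _; exact: poweR_ge0.
- by rewrite in_itv /= leey andbT lee_fin expR_ge0.
rewrite (eq_bigr (fun i => ((m i `^ (pi i)^-1) `^ theta i)%:E)); last first.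
  by move=> i _; rewrite -/(M i) Mfin'.
rewrite prodEFin /= lee_fin le_eqVlt; apply/orP; left; apply/eqP.
rewrite powR_exp ?expR_gt0 // expRK.
rewrite powR_exp // (eq_bigr (fun i => expR (theta i * ((pi i)^-1 * ln (m i))))); last first.
  by move=> i _; rewrite powR_exp ?powR_gt0 // powR_exp // expRK.
rewrite -expR_sum -expRD; congr expR.
rewrite /L mulrDr mulr_sumr; congr (_ + _)%R.
  by rewrite mulrA mulrBr mulr1 mulVf ?gt_eqF.
apply: eq_bigr => i _; rewrite -F1 !mulrA mulVf ?gt_eqF // mul1r.
by [].
Qed.
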